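(* For integer $T\ge1$, $$\lim_{T\to\infty}\frac{2T-G(1/T,T)}{2T}=\frac{3e-2}{2(e^2+e+1)}\approx0.2771.$$
   Context: For $p\in(0,1)$, $T\in\mathbb{N}^+$ and $q=1-p$, define $$G(p,T)=\frac{2T+q^{2T-1}\big[\frac{2}{p}-(\frac{p}{2}-2)(T-1)\big]+q^{T-1}\big(2-\frac{2}{p}-\frac{p}{2}-\frac{Tp}{2}+T^2p\big)}{q^{2T-1}+q^{T-1}(T-1)p+Tp}.$$ This is the average peak AoI of the discrete-time Geo-D dual-queue system: one zero-wait sensor with geometric service time of parameter $p$ and one with deterministic service time $T$ slots. The value $2T=2/\mu$ is the average peak AoI of either single queue (geometric or deterministic) with service rate $\mu=1/T$. The expression inside the limit is therefore the relative average peak AoI reduction when both sensors have service rate $\mu=1/T$. *)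

(* Defs.v *)
From Stdlib Require Import Reals.
From Coquelicot Require Import Coquelicot.
Open Scope R_scope.

(* G(p,T): average peak AoI of the Geo-D dual-queue system, with q = 1 - p.
   T is a positive integer (given as a nat, cast with INR); powers use nat exponents. *)
Definition G (p : R) (T : nat) : R :=
  let q := 1 - p in
  let t := INR T in
  (2 * t
   + q ^ (2 * T - 1) * (2 / p - (p / 2 - 2) * (t - 1))
   + q ^ (T - 1) * (2 - 2 / p - p / 2 - t * p / 2 + t ^ 2 * p))
  / (q ^ (2 * T - 1) + q ^ (T - 1) * (t - 1) * p + t * p).

Definition rel_reduction (T : nat) : R :=
  (2 * INR T - G (1 / INR T) T) / (2 * INR T).

(* Main.v *)
Require Import Defs.
From Stdlib Require Import Reals Lra Lia.
From Coquelicot Require Import Coquelicot.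
Open Scope R_scope.

Lemma ln_le_sub1 y : 0 < y -> ln y <= y - 1.
Proof.
  intro Hy. rewrite <- (exp_ln y) at 2 by exact Hy.
  pose proof (exp_ineq1_le (ln y)). lra.
Qed.

Definition e_ (n : nat) : R := / INR (S n).

Lemma e_lim : is_lim_seq e_ 0.
Proof.
  unfold e_.
  assert (H : is_lim_seq (fun n => INR (S n)) p_infty).
  { apply (is_lim_seq_incr_1 INR p_infty). apply is_lim_seq_INR. }
  pose proof (is_lim_seq_inv _ _ H) as H2. simpl in H2.
  apply H2. discriminate.
Qed.

Lemma e_pos n : 0 < e_ n.
Proof. unfold e_. apply Rinv_0_lt_compat, lt_0_INR; lia. Qed.

Lemma e_le1 n : e_ n <= 1.
Proof.
  unfold e_. rewrite S_INR. pose proof (pos_INR n).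
  rewrite <- Rinv_1. apply Rinv_le_contravar; lra.
Qed.

Definition u_ (n : nat) : R := (1 - e_ n) ^ n.

Lemma u_lim : is_lim_seq u_ (exp (-1)).
Proof.
  set (v := fun n : nat => INR n * ln (1 - e_ n)).
  assert (Hv : is_lim_seq v (-1)).
  { apply is_lim_seq_le_le with (u := fun _ => -1) (w := fun n => - (1 - e_ n)).
    - intro n. unfold v. destruct n as [|m].
      + simpl. split; try lra. unfold e_. simpl. rewrite Rinv_1. lra.
      + pose proof (pos_INR m) as Hm.
        assert (Hq : 1 - e_ (S m) = INR (S m) / INR (S (S m))).
        { unfold e_. rewrite !S_INR. field. lra. }
        rewrite Hq. split.
        * assert (Hl : ln (INR (S m) / INR (S (S m))) = - ln (INR (S (S m)) / INR (S m))).
          { rewrite <- ln_Rinv. f_equal. rewrite !S_INR. field. lra.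
            rewrite !S_INR. apply Rdiv_lt_0_compat; lra. }
          rewrite Hl.
          pose proof (ln_le_sub1 (INR (S (S m)) / INR (S m))) as H1.
          rewrite !S_INR in *. set (x := INR m) in *.
          assert (0 < (x+1+1)/(x+1)) by (apply Rdiv_lt_0_compat; lra).
          specialize (H1 H).
          replace ((x+1+1)/(x+1) - 1) with (/(x+1)) in H1 by (field; lra).
          assert ((x+1) * ln ((x+1+1)/(x+1)) <= 1).
          { apply Rmult_le_compat_l with (r := x+1) in H1; try lra.
            rewrite Rinv_r in H1; lra. }
          lra.
        * pose proof (ln_le_sub1 (INR (S m) / INR (S (S m)))) as H1.
          rewrite !S_INR in *. set (x := INR m) in *.
          assert (0 < (x+1)/(x+1+1)) by (apply Rdiv_lt_0_compat; lra).
          specialize (H1 H).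
          apply Rmult_le_compat_l with (r := x+1) in H1; try lra.
          replace ((x+1) * ((x+1)/(x+1+1) - 1)) with (- ((x+1)/(x+1+1))) in H1 by (field; lra).
          exact H1.
    - apply is_lim_seq_const.
    - replace (-1) with (- (1 - 0)) by ring.
      apply (is_lim_seq_opp _ (Finite (1-0))). apply is_lim_seq_minus'. apply is_lim_seq_const. apply e_lim. }
  apply is_lim_seq_ext_loc with (u := fun n => exp (v n)).
  - exists 1%nat. intros n Hn. unfold v, u_.
    assert (0 < 1 - e_ n).
    { unfold e_. destruct n as [|m]; [lia|]. rewrite !S_INR. pose proof (pos_INR m).
      assert (/ (INR m+1+1) < 1). { rewrite <- Rinv_1. apply Rinv_lt_contravar; lra. } lra. }
    rewrite <- ln_pow by exact H. apply exp_ln. apply pow_lt. exact H.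
  - apply is_lim_seq_continuous. apply derivable_continuous_pt, derivable_pt_exp. exact Hv.
Qed.
Definition f (u e : R) : R :=
  1 - (2 + u*u*(1-e)*(4 - 2*e - (1-e)*e/2) + u*(3*e/2 - 1 - e*e/2))
      / (2 * (u*u*(1-e) + u*(1-e) + 1)).

Lemma rel_eq n : rel_reduction (S n) = f (u_ n) (e_ n).
Proof.
  unfold rel_reduction, G, f, u_.
  replace (2 * S n - 1)%nat with (n + n + 1)%nat by lia.
  replace (S n - 1)%nat with n by lia.
  pose proof (e_pos n) as He. pose proof (e_le1 n) as He1.
  assert (Ht : INR (S n) = / e_ n). { unfold e_. rewrite Rinv_inv. reflexivity. }
  rewrite Ht. rewrite !pow_add. 
  replace (1 - 1 / / e_ n) with (1 - e_ n) by (field; lra).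
  set (e := e_ n) in *. set (U := (1 - e)^n).
  assert (0 <= U) by (apply pow_le; lra).
  assert (0 < U*U*(1-e) + U*(1-e) + 1).
  { assert (0 <= U*U*(1-e)) by (apply Rmult_le_pos; [apply Rmult_le_pos|]; lra).
    assert (0 <= U*(1-e)) by (apply Rmult_le_pos; lra). lra. }
  field; repeat split; lra.
Qed.

Lemma opp_lim u (l : R) : is_lim_seq u l -> is_lim_seq (fun n => - u n) (- l).
Proof. intro H. apply (is_lim_seq_opp u l). exact H. Qed.

Lemma inv_lim u (l : R) : is_lim_seq u l -> l <> 0 -> is_lim_seq (fun n => / u n) (/ l).
Proof. intros H Hl. apply (is_lim_seq_inv u l H). intro E; injection E; auto. Qed.

Lemma f_lim : is_lim_seq (fun n => f (u_ n) (e_ n)) (f (exp (-1)) 0).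
Proof.
  pose proof u_lim. pose proof e_lim.
  unfold f.
  repeat first [ assumption | apply is_lim_seq_const
    | apply is_lim_seq_plus' | apply is_lim_seq_minus' | apply is_lim_seq_mult'
    | apply is_lim_seq_div' | apply opp_lim | apply inv_lim ].
  all: try match goal with |- _ <> 0 => idtac end.
  all: try (pose proof (exp_pos (-1)); nra).
Qed.

Theorem mainTheorem7 :
  is_lim_seq (fun n : nat => rel_reduction (S n))
    (Finite ((3 * exp 1 - 2) / (2 * (exp 1 ^ 2 + exp 1 + 1)))).
Proof.
  apply is_lim_seq_ext with (u := fun n => f (u_ n) (e_ n)).
  { intro n. symmetry. apply rel_eq. }
  replace ((3 * exp 1 - 2) / (2 * (exp 1 ^ 2 + exp 1 + 1))) with (f (exp (-1)) 0).
  { apply f_lim. }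
  unfold f. replace (exp (-1)) with (/ exp 1) by (rewrite <- exp_Ropp; f_equal; ring). pose proof (exp_pos 1).
  field. split; [nra|lra].
Qed.
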